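(* Let $r_1,\dots,r_n\in\mathbb R$ and $r=\mathrm{diag}(r_1,\dots,r_n)$. For each $1\le i,k\le n$, the polynomials $\sigma_k(r+tI)$ (of degree $k$) and $q_{i,k}(t)$ (of degree $k-1$) have only real roots.
   Context: $\sigma_k(r+tI)=\sum_{i_1<\cdots<i_k}(t+r_{i_1})\cdots(t+r_{i_k})$, and $q_{i,k}(t)=\sum_{j=0}^{k-1}(-1)^j\sigma_{k-1-j}(r+tI)(t+r_i)^j$ with $\sigma_0=1$. *)

(* Defs.v *)
From HB Require Import structures.
From mathcomp Require Import all_boot all_order all_algebra.
Set Implicit Arguments. Unset Strict Implicit. Unset Printing Implicit Defensive.
Import Order.TTheory GRing.Theory Num.Theory.
Local Open Scope ring_scope.

(* sigma_k(r + t I) as a polynomial in t: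
   sum over k-subsets A of {0..n-1} of prod_{j in A} (t + r_j).
   For k = 0 this is 1 (empty product over the empty set). *)
Definition sigma_shift (C : numClosedFieldType) (n : nat) (r : 'I_n -> C)
    (k : nat) : {poly C} :=
  \sum_(A : {set 'I_n} | #|A| == k) \prod_(j in A) ('X + (r j)%:P).

Definition q_poly (C : numClosedFieldType) (n : nat) (r : 'I_n -> C)
    (i : 'I_n) (k : nat) : {poly C} :=
  \sum_(j < k) ((-1) ^+ j *: (sigma_shift r (k.-1 - j) * ('X + (r i)%:P) ^+ j)).

Definition only_real_roots (C : numClosedFieldType) (p : {poly C}) : Prop :=
  forall z : C, root p z -> z \is Num.real.

(* Main.v *)
Require Import Defs.
From HB Require Import structures.
From mathcomp Require Import all_boot all_order all_algebra.
From mathcomp Require Import ring zify.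
Import Order.TTheory GRing.Theory Num.Theory.
Local Open Scope ring_scope.

Section GL.
Variable C : numClosedFieldType.

Lemma size_deriv_num (p : {poly C}) : size p^`() = (size p).-1.
Proof.
have [lep1|lt1p] := leqP (size p) 1.
  by rewrite {1}[p]size1_polyC // derivC size_poly0 -subn1 (eqnP lep1).
rewrite size_poly_eq // mulrn_eq0 -subn2 -subSn // subn2.
by rewrite lead_coef_eq0 -size_poly_eq0 -(subnKC lt1p).
Qed.

Lemma deriv_prodX (s : seq C) (z : C) :
  (\prod_(a <- s) ('X - a%:P)).[z] != 0 ->
  (\prod_(a <- s) ('X - a%:P))^`().[z] =
  (\prod_(a <- s) ('X - a%:P)).[z] * \sum_(a <- s) (z - a)^-1.
Proof.
elim: s => [|a s IH]; first by rewrite !big_nil -polyC1 derivC !hornerE.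
rewrite !big_cons derivM derivXsubC mul1r !hornerE => hz.
have [za0 hs] : z - a != 0 /\ (\prod_(a <- s) ('X - a%:P)).[z] != 0.
  by move: hz; rewrite mulf_eq0 negb_or => /andP[].
rewrite IH // mulrDr; congr (_ + _); last by rewrite mulrA.
by rewrite mulrAC divff // mul1r.
Qed.

Lemma deriv_real (p : {poly C}) :
  p^`() != 0 -> only_real_roots p -> only_real_roots p^`().
Proof.
move=> dp0 hp z hz.
have [pz0|pzn] := eqVneq p.[z] 0; first by apply: hp; apply/rootP.
have [s hs] := closed_field_poly_normal p.
set Q := \prod_(a <- s) ('X - a%:P) in hs.
have p0 : p != 0 by apply: contraNneq dp0 => ->; rewrite deriv0.
have lc0 : lead_coef p != 0 by rewrite lead_coef_eq0.
have sreal : forall a, a \in s -> a \is Num.real.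
  move=> a ha; apply: hp; rewrite hs rootZ // /Q.
  by rewrite root_prod_XsubC.
have Qz : Q.[z] != 0.
  by apply: contraNneq pzn; rewrite hs hornerZ => ->; rewrite mulr0.
have hz' : Q^`().[z] = 0.
  move/rootP: hz; rewrite hs derivZ hornerZ => /eqP.
  by rewrite mulf_eq0 (negbTE lc0) => /eqP.
have S0 : \sum_(a <- s) (z - a)^-1 = 0.
  move: hz'; rewrite deriv_prodX // => /eqP; rewrite mulf_eq0 (negbTE Qz).
  by move/eqP.
have za : forall a, a \in s -> z - a != 0.
  move=> a ha; apply: contraNneq Qz => e.
  have := root_prod_XsubC s z; rewrite -/Q /root => ->.
  by move/eqP: e; rewrite subr_eq0 => /eqP ->.
have S1 : \sum_(a <- s) (z^* - a)^-1 = 0.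
  transitivity ((\sum_(a <- s) (z - a)^-1)^*); last by rewrite S0 conjC0.
  rewrite rmorph_sum /=; apply: eq_big_seq => a ha.
  by rewrite fmorphV rmorphB /= (conj_Creal (sreal a ha)).
have key : (z^* - z) * \sum_(a <- s) `|z - a| ^- 2 = 0.
  have E : \sum_(a <- s) ((z - a)^-1 - (z^* - a)^-1) = 0 by rewrite sumrB S0 S1 subrr.
  rewrite mulr_sumr -[RHS]E; apply: eq_big_seq => a ha.
  have h1 := za a ha.
  have h2 : z^* - a != 0.
    by rewrite -(conj_Creal (sreal a ha)) -rmorphB conjC_eq0.
  have -> : `|z - a| ^- 2 = ((z - a) * (z^* - a))^-1.
    by rewrite normCK rmorphB /= (conj_Creal (sreal a ha)).
  by field; rewrite h1 h2.
have sn : s != [::].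
  apply: contraNneq dp0 => es; rewrite hs /Q es big_nil derivZ -polyC1 derivC.
  by rewrite scaler0.
have sum0 : \sum_(a <- s) `|z - a| ^- 2 != 0.
  rewrite psumr_neq0; last by move=> a _; rewrite invr_ge0 exprn_ge0.
  case: s sn za {sreal Q hs Qz hz' S0 S1 key} => [//|a s] _ za.
  apply/hasP; exists a; first exact: mem_head.
  by rewrite invr_gt0 exprn_gt0 // normr_gt0 za // mem_head.
apply/CrealP; apply/eqP; rewrite -subr_eq0.
by move/eqP: key; rewrite mulf_eq0 (negbTE sum0) orbF.
Qed.

Variables  (n : nat) (r : 'I_n -> C).
Local Notation F j := ('X + (r j)%:P).

Lemma derivF j : (F j)^`() = 1.
Proof. by rewrite derivD derivX derivC addr0. Qed.

Lemma deriv_prodF (A : {set 'I_n}) :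
  (\prod_(j in A) F j)^`() = \sum_(j in A) \prod_(l in A :\ j) F l.
Proof.
move: {-1}#|A| (erefl #|A|) => m; elim: m A => [|m IH] A hA.
  move/eqP: hA; rewrite cards_eq0 => /eqP ->.
  by rewrite !big_set0 -polyC1 derivC.
have [a ha] : exists a, a \in A.
  by apply/set0Pn; rewrite -card_gt0 hA.
rewrite (big_setD1 a) //= derivM derivF mul1r IH; last first.
  by move: hA; rewrite (cardsD1 a) ha add1n => -[].
rewrite [RHS](big_setD1 a) //=; congr (_ + _).
rewrite mulr_sumr; apply: eq_bigr => j hj.
have ja : j != a by move: hj; rewrite in_setD1 => /andP[].
rewrite [RHS](big_setD1 a) /=; last by rewrite in_setD1 eq_sym ja ha.
by rewrite !setDDl setUC.
Qed.

Definition E (S : {set 'I_n}) (m : nat) : {poly C} :=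
  \sum_(A : {set 'I_n} | (A \subset S) && (#|A| == m)) \prod_(j in A) F j.

Lemma E_top S : E S #|S| = \prod_(j in S) F j.
Proof.
rewrite /E (bigD1 S) /=; last by rewrite subxx eqxx.
rewrite [X in _ + X]big1 ?addr0 //.
move=> A /andP [/andP [sAS cA] nAS]; exfalso; move/negP: nAS; apply.
by rewrite eqEcard sAS (eqP cA) leqnn.
Qed.

Lemma E_0 S : E S 0 = 1.
Proof.
rewrite /E (eq_bigl (pred1 set0)) ?big_pred1_eq ?big_set0 // => A /=.
rewrite cards_eq0; case: eqP => [->|_]; by rewrite ?sub0set ?andbF.
Qed.

Lemma swap_sum (P : pred {set 'I_n}) (Q : {set 'I_n} -> pred 'I_n)
    (G : {set 'I_n} -> 'I_n -> {poly C}) :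
  \sum_(X | P X) \sum_(j | Q X j) G X j =
  \sum_j \sum_(X | P X && Q X j) G X j.
Proof.
under eq_bigr do rewrite big_mkcond.
rewrite exchange_big; apply: eq_bigr => j _.
by rewrite big_mkcondr.
Qed.

Lemma E_deriv (S : {set 'I_n}) m : (m < #|S|)%N -> (E S m.+1)^`() = (#|S| - m)%:R *: E S m.
Proof.
move=> hm.
rewrite /E linear_sum /=.
under eq_bigr do rewrite deriv_prodF.
rewrite scaler_sumr.
have -> : \sum_(B : {set 'I_n} | (B \subset S) && (#|B| == m)) (#|S| - m)%:R *: \prod_(j in B) F j
  = \sum_(B : {set 'I_n} | (B \subset S) && (#|B| == m)) \sum_(j in S :\: B) \prod_(l in B) F l.
  apply: eq_bigr => B /andP [sBS /eqP cB].
  rewrite sumr_const cardsD (setIidPr sBS) cB scaler_nat //.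
rewrite !swap_sum; apply: eq_bigr => j _.
symmetry.
rewrite (reindex_onto (fun A => A :\ j) (fun B => j |: B)) /=; last first.
  move=> B /andP [_]; rewrite in_setD => /andP [jB _]; exact: setU1K.
apply: eq_big => A; last first.
  by case/andP.
have [jA|jA] := boolP (j \in A); last first.
  rewrite andbF; apply/negbTE/negP => /andP [_ /eqP e].
  by move: jA; rewrite -e setU11.
rewrite setD1K // eqxx andbT andbT in_setD setD11 /= (cardsD1 j A) jA add1n eqSS.
have e : (A \subset S) = (j \in S) && (A :\ j \subset S).
  by rewrite -{1}(setD1K jA) subUset sub1set.
rewrite e.
by case: (A :\ j \subset S) (#|A :\ j| == m) (j \in S) => [] [] [].
Qed.
Lemma E_split (S : {set 'I_n}) i m : i \in S ->
  E S m.+1 = E (S :\ i) m.+1 + F i * E (S :\ i) m.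
Proof.
move=> iS.
rewrite /E [LHS](bigID (fun A : {set 'I_n} => i \in A)) /= addrC; congr (_ + _).
  apply: eq_bigl => A; rewrite subsetD1.
  by case: (A \subset S) (#|A| == m.+1) (i \in A) => [] [] [].
rewrite mulr_sumr.
rewrite [RHS](reindex_onto (fun A => A :\ i) (fun B => i |: B)) /=; last first.
  by move=> B /andP [/subsetD1P [_ iB] _]; exact: setU1K.
apply: eq_big => A; last first.
  by case/andP => _ iA; rewrite (big_setD1 i).
have [iA|iA] := boolP (i \in A); last first.
  rewrite andbF; apply/esym/negbTE/negP => /andP [_ /eqP e].
  by move: iA; rewrite -e setU11.
rewrite setD1K // eqxx andbT andbT subsetD1 setD11 andbT (cardsD1 i A) iA add1n eqSS.
have e : (A \subset S) = (i \in S) && (A :\ i \subset S).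
  by rewrite -{1}(setD1K iA) subUset sub1set.
by rewrite e iS.
Qed.

Lemma q_ident (S : {set 'I_n}) i m : i \in S ->
  \sum_(j < m.+1) ((-1) ^+ j *: (E S (m - j) * F i ^+ j)) = E (S :\ i) m.
Proof.
move=> iS; elim: m => [|m IH].
  by rewrite big_ord1 !E_0 expr0 mulr1 scale1r.
rewrite big_ord_recl /= subn0 expr0 mulr1 scale1r (@E_split S i m iS).
have -> : \sum_(j < m.+1) (-1) ^+ (bump 0 j) *: (E S (m.+1 - bump 0 j) * F i ^+ bump 0 j)
  = - (F i * \sum_(j < m.+1) ((-1) ^+ j *: (E S (m - j) * F i ^+ j))).
  rewrite mulr_sumr -sumrN; apply: eq_bigr => j _.
  rewrite /bump /= add1n subSS !exprS mulN1r scaleNr; congr (- _).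
  by rewrite -scalerAr mulrCA.
by rewrite IH addrK.
Qed.

Lemma E_main (S : {set 'I_n}) m : (forall j, r j \is Num.real) ->
  (m <= #|S|)%N -> size (E S m) = m.+1 /\ only_real_roots (E S m).
Proof.
move=> hr hm.
suff H : forall d, (d <= #|S|)%N ->
    size (E S (#|S| - d)) = (#|S| - d).+1 /\ only_real_roots (E S (#|S| - d)).
  by have := H (#|S| - m)%N (leq_subr _ _); rewrite subKn.
elim=> [|d IH] hd.
  rewrite subn0 E_top; split.
    rewrite size_prod; last by move=> j _; rewrite -size_poly_eq0 size_XaddC.
    rewrite (eq_bigr (fun _ => 2%N)); last by move=> j _; rewrite size_XaddC.
    rewrite sum_nat_const (@eq_card _ _ S) //; lia.
  move=> z /rootP; rewrite horner_prod => /eqP /prodf_eq0 [j _].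
  rewrite !hornerE addr_eq0 => /eqP ->.
  by rewrite rpredN.
have [IHs IHr] := IH (ltnW hd).
have eq1 : (#|S| - d)%N = (#|S| - d.+1).+1 by lia.
rewrite eq1 in IHs IHr.
have hlt : (#|S| - d.+1 < #|S|)%N by lia.
have hD := @E_deriv S _ hlt.
set c := ((#|S| - (#|S| - d.+1))%:R : C) in hD.
have c0 : c != 0 by rewrite /c pnatr_eq0; lia.
have eE : E S (#|S| - d.+1) = c^-1 *: (E S (#|S| - d.+1).+1)^`().
  by rewrite hD scalerA mulVf // scale1r.
have sd : size (E S (#|S| - d.+1).+1)^`() = (#|S| - d.+1).+1.
  by rewrite size_deriv_num IHs.
split; first by rewrite eE size_scale ?invr_eq0 // sd.
move=> z; rewrite eE rootZ ?invr_eq0 //; apply: deriv_real => //.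
by rewrite -size_poly_eq0 sd.
Qed.
End GL.

Theorem lemma2p7 (C : numClosedFieldType) (n : nat) (r : 'I_n -> C)
    (hr : forall j, r j \is Num.real) (i : 'I_n) (k : nat)
    (hk1 : (1 <= k)%N) (hkn : (k <= n)%N) :
  [/\ size (sigma_shift r k) = k.+1,
      only_real_roots (sigma_shift r k),
      size (q_poly r i k) = k
    & only_real_roots (q_poly r i k)].
Proof.
have sE : forall m, sigma_shift r m = E C n r setT m.
  move=> m; rewrite /sigma_shift /E; apply: eq_bigl => A; by rewrite subsetT.
case: k hk1 hkn => [//|m] _ hkn.
have qE : q_poly r i m.+1 = E C n r (setT :\ i) m.
  rewrite /q_poly /= -(@q_ident C n r setT i m (in_setT i)).
  by apply: eq_bigr => j _; rewrite sE.
have h1 : (m.+1 <= #|[set: 'I_n]|)%N by rewrite cardsT card_ord.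
have [s1 r1] := @E_main C n r setT m.+1 hr h1.
have h2 : (m <= #|[set: 'I_n] :\ i|)%N.
  have := cardsD1 i [set: 'I_n]; rewrite in_setT cardsT card_ord /=.
  by move=> e; move: hkn; rewrite {1}e add1n ltnS.
have [s2 r2] := @E_main C n r (setT :\ i) m hr h2.
by split; rewrite ?sE ?qE.
Qed.
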